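(* Let $H$ be obtained from $E_{20}$ by adding a new vertex and joining it to four distinct vertices of $E_{20}$. Then $H$ contains $K_{3,4}$ or $F_4$ as a minor.
   Context: $E_{20}$ is the graph with vertex set $\{e^0,e^1_1,e^1_2,e^1_3,e^2,e^3_1,e^3_2,e^3_3,e^4\}$ and the 16 edges $e^0e^2$; $e^0e^1_i$ ($i=1,2,3$); $e^1_1e^1_2$, $e^1_2e^1_3$, $e^1_3e^1_1$; and, for $i=1,2,3$, $e^1_ie^3_i$, $e^2e^3_i$, $e^4e^3_i$. $F_4$ is the graph with vertex set $\{f^1,f^2\}\cup\{f^i_j: i\in\{1,2\}, j\in\{1,2,3,4\}\}$ and the 16 edges: for each $i\in\{1,2\}$, $f^if^i_1$, $f^if^i_2$, $f^if^i_4$, $f^i_3f^i_1$, $f^i_3f^i_2$, $f^i_3f^i_4$; and $f^1_jf^2_{5-j}$ for $j=1,2,3,4$. *)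

(* Defs.v *)
(* Finite simple graphs as symmetric irreflexive relations on finTypes. *)
From mathcomp Require Import all_boot.
Set Implicit Arguments. Unset Strict Implicit. Unset Printing Implicit Defensive.

Definition graph_of_edges (n : nat) (es : seq (nat * nat)) : rel 'I_n :=
  [rel i j | ((val i, val j) \in es) || ((val j, val i) \in es)].

(* E_20, with vertex numbering
   e^0 = 0, e^1_1 = 1, e^1_2 = 2, e^1_3 = 3, e^2 = 4,
   e^3_1 = 5, e^3_2 = 6, e^3_3 = 7, e^4 = 8. *)
Definition E20_edges : seq (nat * nat) :=
  [:: (0,4); (0,1); (0,2); (0,3);
      (1,2); (2,3); (3,1);
      (1,5); (2,6); (3,7);
      (4,5); (4,6); (4,7);
      (8,5); (8,6); (8,7)].
Definition E20 : rel 'I_9 := @graph_of_edges 9 E20_edges.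

(* F_4, with vertex numbering f^1 = 0, f^2 = 1, f^1_j = 1 + j, f^2_j = 5 + j (j = 1..4). *)
Definition F4_edges : seq (nat * nat) :=
  [:: (0,2); (0,3); (0,5); (4,2); (4,3); (4,5);
      (1,6); (1,7); (1,9); (8,6); (8,7); (8,9);
      (2,9); (3,8); (4,7); (5,6)].                  (* f^1_j f^2_{5-j} *)
Definition F4 : rel 'I_10 := @graph_of_edges 10 F4_edges.

Definition K34 : rel 'I_7 := [rel i j | (val i < 3) != (val j < 3)].

Definition H_of (S : {set 'I_9}) : rel (option 'I_9) :=
  fun x y => match x, y with
  | Some a, Some b => E20 a b
  | None, Some b => b \in S
  | Some a, None => a \in S
  | None, None => false
  end.

Definition is_minor (U V : finType) (F : rel U) (G : rel V) : Prop :=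
  exists B : U -> {set V},
    [/\ (forall u, B u != set0),
        (forall u u', u != u' -> [disjoint B u & B u']),
        (forall u x y, x \in B u -> y \in B u ->
           connect [rel a b | [&& a \in B u, b \in B u & G a b]] x y) &
        (forall u u', F u u' ->
           exists x y, [/\ x \in B u, y \in B u' & G x y])].

(* Main.v *)
Require Import Defs.
From mathcomp Require Import all_boot.
Set Implicit Arguments. Unset Strict Implicit. Unset Printing Implicit Defensive.

Definition enc (x : option 'I_9) : nat := if x is Some a then val a else 9.
Definition dec (n : nat) : option 'I_9 := if n < 9 then Some (@inord 8 n) else None.

Lemma encK n : n < 10 -> enc (dec n) = n.
Proof.
rewrite /dec => h2; case: ifP => h1 /=; first by rewrite inordK.
by apply/eqP; rewrite eqn_leq leqNgt h1 -ltnS h2.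
Qed.

Lemma decK x : dec (enc x) = x.
Proof. case: x => [a|] //=; by rewrite /dec ltn_ord inord_val. Qed.

Definition Hb (bits : seq bool) (x y : nat) : bool :=
  if x == 9 then (if y == 9 then false else nth false bits y)
  else if y == 9 then nth false bits x
  else ((x, y) \in E20_edges) || ((y, x) \in E20_edges).

Definition bitsOf (S : {set 'I_9}) : seq bool := [seq @inord 8 i \in S | i <- iota 0 9].

Lemma bitsOfE S (a : 'I_9) : nth false (bitsOf S) (val a) = (a \in S).
Proof. rewrite /bitsOf (nth_map 0) ?size_iota ?ltn_ord //. by rewrite nth_iota ?ltn_ord // add0n inord_val. Qed.

Lemma HbE S x y : H_of S x y = Hb (bitsOf S) (enc x) (enc y).
Proof.
have ne : forall a : 'I_9, (val a == 9) = false.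
  by move=> a; apply/negbTE; rewrite neq_ltn ltn_ord.
case: x => [a|]; case: y => [b|] //=; rewrite /Hb /= ?ne ?bitsOfE //.
Qed.

Lemma HbE' S m n : m < 10 -> n < 10 -> H_of S (dec m) (dec n) = Hb (bitsOf S) m n.
Proof. by move=> hm hn; rewrite HbE !encK. Qed.

Fixpoint tree_aux (bits : seq bool) (seen t : seq nat) : bool :=
  match t with
  | [::] => true
  | x :: t' => has (fun y => Hb bits y x && Hb bits x y) seen && tree_aux bits (x :: seen) t'
  end.

Definition checkN (n : nat) (Fn : nat -> nat -> bool) (bits : seq bool) (L : seq (seq nat)) : bool :=
  [&& all (fun i => nth [::] L i != [::]) (iota 0 n),
      all (fun i => all (fun x => x < 10) (nth [::] L i)) (iota 0 n),
      all (fun i => all (fun j => (i == j) || ~~ has (fun x => x \in nth [::] L j) (nth [::] L i)) (iota 0 n)) (iota 0 n),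
      all (fun i => if nth [::] L i is h :: t then tree_aux bits [:: h] t else true) (iota 0 n) &
      all (fun i => all (fun j => ~~ Fn i j || has (fun x => has (fun y => Hb bits x y) (nth [::] L j)) (nth [::] L i)) (iota 0 n)) (iota 0 n)].

Lemma tree_ok (S : {set 'I_9}) (l : seq nat) (R : rel (option 'I_9)) h :
  (forall m n, m \in l -> n \in l -> Hb (bitsOf S) m n -> R (dec m) (dec n)) ->
  forall seen t, {subset seen <= l} -> {subset t <= l} ->
  (forall s, s \in seen -> connect R (dec h) (dec s) && connect R (dec s) (dec h)) ->
  tree_aux (bitsOf S) seen t ->
  forall z, z \in t -> connect R (dec h) (dec z) && connect R (dec z) (dec h).
Proof.
move=> HR seen t; elim: t seen => [|x t IH] seen //= hs ht hc /andP [/hasP [y ys /andP [e1 e2]] hr] z.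
have xl : x \in l by apply: ht; rewrite inE eqxx.
have hx : connect R (dec h) (dec x) && connect R (dec x) (dec h).
  case/andP: (hc y ys) => c1 c2; apply/andP; split.
  - apply: connect_trans c1 _; apply: connect1; apply: HR => //; exact: hs.
  - apply: connect_trans _ c2; apply: connect1; apply: HR => //; exact: hs.
rewrite inE => /orP [/eqP -> //|zt].
apply: (IH (x :: seen)) => //.
- by move=> w; rewrite inE => /orP [/eqP -> //|]; apply: hs.
- by move=> w wt; apply: ht; rewrite inE wt orbT.
- by move=> w; rewrite inE => /orP [/eqP -> //|]; apply: hc.
Qed.

Lemma checkN_sound n (F : rel 'I_n) (Fn : nat -> nat -> bool)
  (hF : forall u u', F u u' -> Fn (val u) (val u')) (S : {set 'I_9}) L :
  checkN n Fn (bitsOf S) L -> is_minor F (H_of S).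
Proof.
case/and5P => /allP c1 /allP c0 /allP c2 /allP c3 /allP c4.
have io (u : 'I_n) : val u \in iota 0 n by rewrite mem_iota add0n ltn_ord.
pose B (u : 'I_n) := [set x | enc x \in nth [::] L (val u)].
have lt10 (u : 'I_n) m : m \in nth [::] L (val u) -> m < 10.
  by move=> hm; move: (c0 _ (io u)) => /= /allP; apply.
have inB (u : 'I_n) m : m \in nth [::] L (val u) -> dec m \in B u.
  by move=> hm; rewrite inE (encK (lt10 _ _ hm)).
exists B; split.
- move=> u; move: (c1 _ (io u)); case E: (nth [::] L (val u)) => [|h t] // _.
  apply/set0Pn; exists (dec h); apply: inB; rewrite E inE eqxx //.
- move=> u u' ne; apply/pred0P => x /=; apply/negbTE/negP; rewrite !inE => /andP [x1 x2].
  move: (allP (c2 _ (io u)) _ (io u')); rewrite (inj_eq val_inj) (negbTE ne) /=.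
  by move/hasP; apply; exists (enc x).
- move=> u x y; rewrite !inE.
  move: (c3 _ (io u)) (lt10 u) (inB u); case E: (nth [::] L (val u)) => [|h t] //= tr l10 iB hx hy.
  set R := [rel a b | _].
  have HR : forall m k, m \in h :: t -> k \in h :: t -> Hb (bitsOf S) m k -> R (dec m) (dec k).
    move=> m k hm hk e; rewrite /R /= iB // iB //= HbE' //; by apply: l10.
  have all_c : forall z, z \in h :: t -> connect R (dec h) (dec z) && connect R (dec z) (dec h).
    move=> z; rewrite inE => /orP [/eqP -> |zt]; first by rewrite connect0.
    apply: (tree_ok HR (seen := [:: h]) (t := t)) => //.
    - by move=> w; rewrite inE => /eqP ->; rewrite inE eqxx.
    - by move=> w wt; rewrite inE wt orbT.
    - by move=> s; rewrite inE => /eqP ->; rewrite connect0.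
  case/andP: (all_c _ hx) => _ a2; case/andP: (all_c _ hy) => a3 _.
  by rewrite -(decK x) -(decK y); apply: connect_trans a2 a3.
- move=> u u' e; move: (allP (c4 _ (io u)) _ (io u')); rewrite hF //=.
  case/hasP => m hm /hasP [k hk e'].
  exists (dec m), (dec k); split; try by apply: inB.
  by rewrite HbE' //; [apply: (lt10 u) | apply: (lt10 u')].
Qed.

Definition table : seq (seq nat * seq (seq nat)) := [::
  ([:: 0; 1; 2; 3], [:: [:: 8]; [:: 9]; [:: 5]; [:: 6]; [:: 4]; [:: 7]; [:: 3]; [:: 0]; [:: 2]; [:: 1]]);
  ([:: 0; 1; 2; 4], [:: [:: 0]; [:: 8]; [:: 1]; [:: 9]; [:: 2]; [:: 3]; [:: 7]; [:: 6]; [:: 4]; [:: 5]]);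
  ([:: 0; 1; 2; 5], [:: [:: 1]; [:: 8]; [:: 3]; [:: 0]; [:: 2]; [:: 9]; [:: 5]; [:: 6]; [:: 4]; [:: 7]]);
  ([:: 0; 1; 2; 6], [:: [:: 2]; [:: 8]; [:: 3]; [:: 0]; [:: 1]; [:: 9]; [:: 6]; [:: 5]; [:: 4]; [:: 7]]);
  ([:: 0; 1; 2; 7], [:: [:: 3]; [:: 8]; [:: 1]; [:: 0]; [:: 9]; [:: 2]; [:: 6]; [:: 7]; [:: 4]; [:: 5]]);
  ([:: 0; 1; 2; 8], [:: [:: 0]; [:: 4]; [:: 1]; [:: 9]; [:: 2]; [:: 3]; [:: 7]; [:: 6]; [:: 8]; [:: 5]]);
  ([:: 0; 1; 3; 4], [:: [:: 0]; [:: 8]; [:: 1]; [:: 9]; [:: 3]; [:: 2]; [:: 6]; [:: 7]; [:: 4]; [:: 5]]);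
  ([:: 0; 1; 3; 5], [:: [:: 1]; [:: 8]; [:: 2]; [:: 0]; [:: 3]; [:: 9]; [:: 5]; [:: 7]; [:: 4]; [:: 6]]);
  ([:: 0; 1; 3; 6], [:: [:: 2]; [:: 8]; [:: 1]; [:: 0]; [:: 9]; [:: 3]; [:: 7]; [:: 6]; [:: 4]; [:: 5]]);
  ([:: 0; 1; 3; 7], [:: [:: 3]; [:: 8]; [:: 2]; [:: 0]; [:: 1]; [:: 9]; [:: 7]; [:: 5]; [:: 4]; [:: 6]]);
  ([:: 0; 1; 3; 8], [:: [:: 0]; [:: 4]; [:: 1]; [:: 9]; [:: 3]; [:: 2]; [:: 6]; [:: 7]; [:: 8]; [:: 5]]);
  ([:: 0; 1; 4; 5], [:: [:: 0]; [:: 8]; [:: 2]; [:: 9]; [:: 1]; [:: 3]; [:: 7]; [:: 5]; [:: 4]; [:: 6]]);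
  ([:: 0; 1; 4; 6], [:: [:: 0]; [:: 8]; [:: 2]; [:: 9]; [:: 1]; [:: 3]; [:: 7]; [:: 5]; [:: 4]; [:: 6]]);
  ([:: 0; 1; 4; 7], [:: [:: 0]; [:: 8]; [:: 2]; [:: 9]; [:: 1]; [:: 3]; [:: 7]; [:: 5]; [:: 4]; [:: 6]]);
  ([:: 0; 1; 4; 8], [:: [:: 0]; [:: 4]; [:: 2]; [:: 9]; [:: 1]; [:: 3]; [:: 7]; [:: 5]; [:: 8]; [:: 6]]);
  ([:: 0; 1; 5; 6], [:: [:: 0; 3; 7]; [:: 5]; [:: 6]; [:: 1; 2]; [:: 4]; [:: 8]; [:: 9]]);
  ([:: 0; 1; 5; 7], [:: [:: 0; 2; 6]; [:: 5]; [:: 7]; [:: 1; 3]; [:: 4]; [:: 8]; [:: 9]]);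
  ([:: 0; 1; 5; 8], [:: [:: 0]; [:: 4]; [:: 2]; [:: 9]; [:: 1]; [:: 3]; [:: 7]; [:: 5]; [:: 8]; [:: 6]]);
  ([:: 0; 1; 6; 7], [:: [:: 0; 1; 5]; [:: 6]; [:: 7]; [:: 2; 3]; [:: 4]; [:: 8]; [:: 9]]);
  ([:: 0; 1; 6; 8], [:: [:: 0]; [:: 4]; [:: 2]; [:: 9]; [:: 1]; [:: 3]; [:: 7]; [:: 5]; [:: 8]; [:: 6]]);
  ([:: 0; 1; 7; 8], [:: [:: 0]; [:: 4]; [:: 2]; [:: 9]; [:: 1]; [:: 3]; [:: 7]; [:: 5]; [:: 8]; [:: 6]]);
  ([:: 0; 2; 3; 4], [:: [:: 0]; [:: 8]; [:: 1]; [:: 9]; [:: 2]; [:: 3]; [:: 7]; [:: 6]; [:: 4]; [:: 5]]);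
  ([:: 0; 2; 3; 5], [:: [:: 1]; [:: 8]; [:: 2]; [:: 0]; [:: 9]; [:: 3]; [:: 7]; [:: 5]; [:: 4]; [:: 6]]);
  ([:: 0; 2; 3; 6], [:: [:: 2]; [:: 8]; [:: 1]; [:: 0]; [:: 3]; [:: 9]; [:: 6]; [:: 7]; [:: 4]; [:: 5]]);
  ([:: 0; 2; 3; 7], [:: [:: 3]; [:: 8]; [:: 1]; [:: 0]; [:: 2]; [:: 9]; [:: 7]; [:: 6]; [:: 4]; [:: 5]]);
  ([:: 0; 2; 3; 8], [:: [:: 0]; [:: 4]; [:: 1]; [:: 9]; [:: 2]; [:: 3]; [:: 7]; [:: 6]; [:: 8]; [:: 5]]);
  ([:: 0; 2; 4; 5], [:: [:: 0]; [:: 8]; [:: 1]; [:: 9]; [:: 2]; [:: 3]; [:: 7]; [:: 6]; [:: 4]; [:: 5]]);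
  ([:: 0; 2; 4; 6], [:: [:: 0]; [:: 8]; [:: 1]; [:: 9]; [:: 2]; [:: 3]; [:: 7]; [:: 6]; [:: 4]; [:: 5]]);
  ([:: 0; 2; 4; 7], [:: [:: 0]; [:: 8]; [:: 1]; [:: 9]; [:: 2]; [:: 3]; [:: 7]; [:: 6]; [:: 4]; [:: 5]]);
  ([:: 0; 2; 4; 8], [:: [:: 0]; [:: 4]; [:: 1]; [:: 9]; [:: 2]; [:: 3]; [:: 7]; [:: 6]; [:: 8]; [:: 5]]);
  ([:: 0; 2; 5; 6], [:: [:: 0; 3; 7]; [:: 5]; [:: 6]; [:: 1; 2]; [:: 4]; [:: 8]; [:: 9]]);
  ([:: 0; 2; 5; 7], [:: [:: 2; 6]; [:: 5]; [:: 7]; [:: 0; 1; 3]; [:: 4]; [:: 8]; [:: 9]]);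
  ([:: 0; 2; 5; 8], [:: [:: 0]; [:: 4]; [:: 1]; [:: 9]; [:: 2]; [:: 3]; [:: 7]; [:: 6]; [:: 8]; [:: 5]]);
  ([:: 0; 2; 6; 7], [:: [:: 0; 1; 5]; [:: 6]; [:: 7]; [:: 2; 3]; [:: 4]; [:: 8]; [:: 9]]);
  ([:: 0; 2; 6; 8], [:: [:: 0]; [:: 4]; [:: 1]; [:: 9]; [:: 2]; [:: 3]; [:: 7]; [:: 6]; [:: 8]; [:: 5]]);
  ([:: 0; 2; 7; 8], [:: [:: 0]; [:: 4]; [:: 1]; [:: 9]; [:: 2]; [:: 3]; [:: 7]; [:: 6]; [:: 8]; [:: 5]]);
  ([:: 0; 3; 4; 5], [:: [:: 0]; [:: 8]; [:: 1]; [:: 9]; [:: 3]; [:: 2]; [:: 6]; [:: 7]; [:: 4]; [:: 5]]);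
  ([:: 0; 3; 4; 6], [:: [:: 0]; [:: 8]; [:: 1]; [:: 9]; [:: 3]; [:: 2]; [:: 6]; [:: 7]; [:: 4]; [:: 5]]);
  ([:: 0; 3; 4; 7], [:: [:: 0]; [:: 8]; [:: 1]; [:: 9]; [:: 3]; [:: 2]; [:: 6]; [:: 7]; [:: 4]; [:: 5]]);
  ([:: 0; 3; 4; 8], [:: [:: 0]; [:: 4]; [:: 1]; [:: 9]; [:: 3]; [:: 2]; [:: 6]; [:: 7]; [:: 8]; [:: 5]]);
  ([:: 0; 3; 5; 6], [:: [:: 3; 7]; [:: 5]; [:: 6]; [:: 0; 1; 2]; [:: 4]; [:: 8]; [:: 9]]);
  ([:: 0; 3; 5; 7], [:: [:: 0; 2; 6]; [:: 5]; [:: 7]; [:: 1; 3]; [:: 4]; [:: 8]; [:: 9]]);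
  ([:: 0; 3; 5; 8], [:: [:: 0]; [:: 4]; [:: 1]; [:: 9]; [:: 3]; [:: 2]; [:: 6]; [:: 7]; [:: 8]; [:: 5]]);
  ([:: 0; 3; 6; 7], [:: [:: 0; 1; 5]; [:: 6]; [:: 7]; [:: 2; 3]; [:: 4]; [:: 8]; [:: 9]]);
  ([:: 0; 3; 6; 8], [:: [:: 0]; [:: 4]; [:: 1]; [:: 9]; [:: 3]; [:: 2]; [:: 6]; [:: 7]; [:: 8]; [:: 5]]);
  ([:: 0; 3; 7; 8], [:: [:: 0]; [:: 4]; [:: 1]; [:: 9]; [:: 3]; [:: 2]; [:: 6]; [:: 7]; [:: 8]; [:: 5]]);
  ([:: 0; 4; 5; 6], [:: [:: 0; 3; 7]; [:: 5]; [:: 6]; [:: 1; 2]; [:: 4]; [:: 8]; [:: 9]]);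
  ([:: 0; 4; 5; 7], [:: [:: 0; 2; 6]; [:: 5]; [:: 7]; [:: 1; 3]; [:: 4]; [:: 8]; [:: 9]]);
  ([:: 0; 4; 5; 8], [:: [:: 0; 1; 2; 3]; [:: 4]; [:: 8]; [:: 5]; [:: 6]; [:: 7]; [:: 9]]);
  ([:: 0; 4; 6; 7], [:: [:: 0; 1; 5]; [:: 6]; [:: 7]; [:: 2; 3]; [:: 4]; [:: 8]; [:: 9]]);
  ([:: 0; 4; 6; 8], [:: [:: 0; 1; 2; 3]; [:: 4]; [:: 8]; [:: 5]; [:: 6]; [:: 7]; [:: 9]]);
  ([:: 0; 4; 7; 8], [:: [:: 0; 1; 2; 3]; [:: 4]; [:: 8]; [:: 5]; [:: 6]; [:: 7]; [:: 9]]);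
  ([:: 0; 5; 6; 7], [:: [:: 5]; [:: 6]; [:: 7]; [:: 0; 1; 2; 3]; [:: 4]; [:: 8]; [:: 9]]);
  ([:: 0; 5; 6; 8], [:: [:: 0; 3; 7]; [:: 5]; [:: 6]; [:: 1; 2]; [:: 4]; [:: 8]; [:: 9]]);
  ([:: 0; 5; 7; 8], [:: [:: 0; 2; 6]; [:: 5]; [:: 7]; [:: 1; 3]; [:: 4]; [:: 8]; [:: 9]]);
  ([:: 0; 6; 7; 8], [:: [:: 0; 1; 5]; [:: 6]; [:: 7]; [:: 2; 3]; [:: 4]; [:: 8]; [:: 9]]);
  ([:: 1; 2; 3; 4], [:: [:: 1; 2]; [:: 3; 7; 8]; [:: 4]; [:: 0]; [:: 5]; [:: 6]; [:: 9]]);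
  ([:: 1; 2; 3; 5], [:: [:: 1]; [:: 8]; [:: 2]; [:: 0]; [:: 3]; [:: 9]; [:: 5]; [:: 7]; [:: 4]; [:: 6]]);
  ([:: 1; 2; 3; 6], [:: [:: 2]; [:: 8]; [:: 1]; [:: 0]; [:: 3]; [:: 9]; [:: 6]; [:: 7]; [:: 4]; [:: 5]]);
  ([:: 1; 2; 3; 7], [:: [:: 3]; [:: 8]; [:: 1]; [:: 0]; [:: 2]; [:: 9]; [:: 7]; [:: 6]; [:: 4]; [:: 5]]);
  ([:: 1; 2; 3; 8], [:: [:: 1; 5]; [:: 2; 6]; [:: 3; 7]; [:: 0]; [:: 4]; [:: 8]; [:: 9]]);
  ([:: 1; 2; 4; 5], [:: [:: 1]; [:: 8]; [:: 3]; [:: 0]; [:: 2]; [:: 9]; [:: 5]; [:: 6]; [:: 4]; [:: 7]]);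
  ([:: 1; 2; 4; 6], [:: [:: 2]; [:: 8]; [:: 3]; [:: 0]; [:: 1]; [:: 9]; [:: 6]; [:: 5]; [:: 4]; [:: 7]]);
  ([:: 1; 2; 4; 7], [:: [:: 0; 1; 5]; [:: 2; 6]; [:: 7]; [:: 3]; [:: 4]; [:: 8]; [:: 9]]);
  ([:: 1; 2; 4; 8], [:: [:: 0; 1; 2; 3]; [:: 4]; [:: 8]; [:: 5]; [:: 6]; [:: 7]; [:: 9]]);
  ([:: 1; 2; 5; 6], [:: [:: 1]; [:: 8]; [:: 3]; [:: 0]; [:: 2]; [:: 9]; [:: 5]; [:: 6]; [:: 4]; [:: 7]]);
  ([:: 1; 2; 5; 7], [:: [:: 1]; [:: 8]; [:: 3]; [:: 0]; [:: 2]; [:: 9]; [:: 5]; [:: 6]; [:: 4]; [:: 7]]);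
  ([:: 1; 2; 5; 8], [:: [:: 1]; [:: 8]; [:: 3]; [:: 0]; [:: 2]; [:: 9]; [:: 5]; [:: 6]; [:: 4]; [:: 7]]);
  ([:: 1; 2; 6; 7], [:: [:: 2]; [:: 8]; [:: 3]; [:: 0]; [:: 1]; [:: 9]; [:: 6]; [:: 5]; [:: 4]; [:: 7]]);
  ([:: 1; 2; 6; 8], [:: [:: 2]; [:: 8]; [:: 3]; [:: 0]; [:: 1]; [:: 9]; [:: 6]; [:: 5]; [:: 4]; [:: 7]]);
  ([:: 1; 2; 7; 8], [:: [:: 0; 1; 5]; [:: 2; 6]; [:: 7]; [:: 3]; [:: 4]; [:: 8]; [:: 9]]);
  ([:: 1; 3; 4; 5], [:: [:: 1]; [:: 8]; [:: 2]; [:: 0]; [:: 3]; [:: 9]; [:: 5]; [:: 7]; [:: 4]; [:: 6]]);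
  ([:: 1; 3; 4; 6], [:: [:: 0; 1; 5]; [:: 3; 7]; [:: 6]; [:: 2]; [:: 4]; [:: 8]; [:: 9]]);
  ([:: 1; 3; 4; 7], [:: [:: 3]; [:: 8]; [:: 2]; [:: 0]; [:: 1]; [:: 9]; [:: 7]; [:: 5]; [:: 4]; [:: 6]]);
  ([:: 1; 3; 4; 8], [:: [:: 0; 1; 2; 3]; [:: 4]; [:: 8]; [:: 5]; [:: 6]; [:: 7]; [:: 9]]);
  ([:: 1; 3; 5; 6], [:: [:: 1]; [:: 8]; [:: 2]; [:: 0]; [:: 3]; [:: 9]; [:: 5]; [:: 7]; [:: 4]; [:: 6]]);
  ([:: 1; 3; 5; 7], [:: [:: 1]; [:: 8]; [:: 2]; [:: 0]; [:: 3]; [:: 9]; [:: 5]; [:: 7]; [:: 4]; [:: 6]]);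
  ([:: 1; 3; 5; 8], [:: [:: 1]; [:: 8]; [:: 2]; [:: 0]; [:: 3]; [:: 9]; [:: 5]; [:: 7]; [:: 4]; [:: 6]]);
  ([:: 1; 3; 6; 7], [:: [:: 3]; [:: 8]; [:: 2]; [:: 0]; [:: 1]; [:: 9]; [:: 7]; [:: 5]; [:: 4]; [:: 6]]);
  ([:: 1; 3; 6; 8], [:: [:: 0; 1; 5]; [:: 3; 7]; [:: 6]; [:: 2]; [:: 4]; [:: 8]; [:: 9]]);
  ([:: 1; 3; 7; 8], [:: [:: 3]; [:: 8]; [:: 2]; [:: 0]; [:: 1]; [:: 9]; [:: 7]; [:: 5]; [:: 4]; [:: 6]]);
  ([:: 1; 4; 5; 6], [:: [:: 1; 3]; [:: 4]; [:: 6; 8]; [:: 0; 2]; [:: 5]; [:: 7]; [:: 9]]);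
  ([:: 1; 4; 5; 7], [:: [:: 1; 2]; [:: 4]; [:: 7; 8]; [:: 0; 3]; [:: 5]; [:: 6]; [:: 9]]);
  ([:: 1; 4; 5; 8], [:: [:: 0; 1; 2; 3]; [:: 4]; [:: 8]; [:: 5]; [:: 6]; [:: 7]; [:: 9]]);
  ([:: 1; 4; 6; 7], [:: [:: 0; 1; 5]; [:: 6]; [:: 7]; [:: 2; 3]; [:: 4]; [:: 8]; [:: 9]]);
  ([:: 1; 4; 6; 8], [:: [:: 0; 1; 2; 3]; [:: 4]; [:: 8]; [:: 5]; [:: 6]; [:: 7]; [:: 9]]);
  ([:: 1; 4; 7; 8], [:: [:: 0; 1; 2; 3]; [:: 4]; [:: 8]; [:: 5]; [:: 6]; [:: 7]; [:: 9]]);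
  ([:: 1; 5; 6; 7], [:: [:: 5]; [:: 6]; [:: 7]; [:: 0; 1; 2; 3]; [:: 4]; [:: 8]; [:: 9]]);
  ([:: 1; 5; 6; 8], [:: [:: 1]; [:: 3; 7; 8]; [:: 4; 6]; [:: 0]; [:: 2]; [:: 5]; [:: 9]]);
  ([:: 1; 5; 7; 8], [:: [:: 1]; [:: 2; 6; 8]; [:: 4; 7]; [:: 0]; [:: 3]; [:: 5]; [:: 9]]);
  ([:: 1; 6; 7; 8], [:: [:: 0; 1; 5]; [:: 6]; [:: 7]; [:: 2; 3]; [:: 4]; [:: 8]; [:: 9]]);
  ([:: 2; 3; 4; 5], [:: [:: 2; 3]; [:: 4]; [:: 5; 8]; [:: 0; 1]; [:: 6]; [:: 7]; [:: 9]]);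
  ([:: 2; 3; 4; 6], [:: [:: 2]; [:: 8]; [:: 1]; [:: 0]; [:: 3]; [:: 9]; [:: 6]; [:: 7]; [:: 4]; [:: 5]]);
  ([:: 2; 3; 4; 7], [:: [:: 3]; [:: 8]; [:: 1]; [:: 0]; [:: 2]; [:: 9]; [:: 7]; [:: 6]; [:: 4]; [:: 5]]);
  ([:: 2; 3; 4; 8], [:: [:: 0; 1; 2; 3]; [:: 4]; [:: 8]; [:: 5]; [:: 6]; [:: 7]; [:: 9]]);
  ([:: 2; 3; 5; 6], [:: [:: 2]; [:: 8]; [:: 1]; [:: 0]; [:: 3]; [:: 9]; [:: 6]; [:: 7]; [:: 4]; [:: 5]]);
  ([:: 2; 3; 5; 7], [:: [:: 3]; [:: 8]; [:: 1]; [:: 0]; [:: 2]; [:: 9]; [:: 7]; [:: 6]; [:: 4]; [:: 5]]);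
  ([:: 2; 3; 5; 8], [:: [:: 2; 6]; [:: 3; 7]; [:: 5]; [:: 0; 1]; [:: 4]; [:: 8]; [:: 9]]);
  ([:: 2; 3; 6; 7], [:: [:: 2]; [:: 8]; [:: 1]; [:: 0]; [:: 3]; [:: 9]; [:: 6]; [:: 7]; [:: 4]; [:: 5]]);
  ([:: 2; 3; 6; 8], [:: [:: 2]; [:: 8]; [:: 1]; [:: 0]; [:: 3]; [:: 9]; [:: 6]; [:: 7]; [:: 4]; [:: 5]]);
  ([:: 2; 3; 7; 8], [:: [:: 3]; [:: 8]; [:: 1]; [:: 0]; [:: 2]; [:: 9]; [:: 7]; [:: 6]; [:: 4]; [:: 5]]);
  ([:: 2; 4; 5; 6], [:: [:: 2; 3]; [:: 4]; [:: 5; 8]; [:: 0; 1]; [:: 6]; [:: 7]; [:: 9]]);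
  ([:: 2; 4; 5; 7], [:: [:: 2; 6]; [:: 5]; [:: 7]; [:: 0; 1; 3]; [:: 4]; [:: 8]; [:: 9]]);
  ([:: 2; 4; 5; 8], [:: [:: 0; 1; 2; 3]; [:: 4]; [:: 8]; [:: 5]; [:: 6]; [:: 7]; [:: 9]]);
  ([:: 2; 4; 6; 7], [:: [:: 1; 2]; [:: 4]; [:: 7; 8]; [:: 0; 3]; [:: 5]; [:: 6]; [:: 9]]);
  ([:: 2; 4; 6; 8], [:: [:: 0; 1; 2; 3]; [:: 4]; [:: 8]; [:: 5]; [:: 6]; [:: 7]; [:: 9]]);
  ([:: 2; 4; 7; 8], [:: [:: 0; 1; 2; 3]; [:: 4]; [:: 8]; [:: 5]; [:: 6]; [:: 7]; [:: 9]]);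
  ([:: 2; 5; 6; 7], [:: [:: 5]; [:: 6]; [:: 7]; [:: 0; 1; 2; 3]; [:: 4]; [:: 8]; [:: 9]]);
  ([:: 2; 5; 6; 8], [:: [:: 2]; [:: 3; 7; 8]; [:: 4; 5]; [:: 0]; [:: 1]; [:: 6]; [:: 9]]);
  ([:: 2; 5; 7; 8], [:: [:: 2; 6]; [:: 5]; [:: 7]; [:: 0; 1; 3]; [:: 4]; [:: 8]; [:: 9]]);
  ([:: 2; 6; 7; 8], [:: [:: 1; 5; 8]; [:: 2]; [:: 4; 7]; [:: 0]; [:: 3]; [:: 6]; [:: 9]]);
  ([:: 3; 4; 5; 6], [:: [:: 3; 7]; [:: 5]; [:: 6]; [:: 0; 1; 2]; [:: 4]; [:: 8]; [:: 9]]);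
  ([:: 3; 4; 5; 7], [:: [:: 2; 3]; [:: 4]; [:: 5; 8]; [:: 0; 1]; [:: 6]; [:: 7]; [:: 9]]);
  ([:: 3; 4; 5; 8], [:: [:: 0; 1; 2; 3]; [:: 4]; [:: 8]; [:: 5]; [:: 6]; [:: 7]; [:: 9]]);
  ([:: 3; 4; 6; 7], [:: [:: 1; 3]; [:: 4]; [:: 6; 8]; [:: 0; 2]; [:: 5]; [:: 7]; [:: 9]]);
  ([:: 3; 4; 6; 8], [:: [:: 0; 1; 2; 3]; [:: 4]; [:: 8]; [:: 5]; [:: 6]; [:: 7]; [:: 9]]);
  ([:: 3; 4; 7; 8], [:: [:: 0; 1; 2; 3]; [:: 4]; [:: 8]; [:: 5]; [:: 6]; [:: 7]; [:: 9]]);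
  ([:: 3; 5; 6; 7], [:: [:: 5]; [:: 6]; [:: 7]; [:: 0; 1; 2; 3]; [:: 4]; [:: 8]; [:: 9]]);
  ([:: 3; 5; 6; 8], [:: [:: 3; 7]; [:: 5]; [:: 6]; [:: 0; 1; 2]; [:: 4]; [:: 8]; [:: 9]]);
  ([:: 3; 5; 7; 8], [:: [:: 2; 6; 8]; [:: 3]; [:: 4; 5]; [:: 0]; [:: 1]; [:: 7]; [:: 9]]);
  ([:: 3; 6; 7; 8], [:: [:: 1; 5; 8]; [:: 3]; [:: 4; 6]; [:: 0]; [:: 2]; [:: 7]; [:: 9]]);
  ([:: 4; 5; 6; 7], [:: [:: 5]; [:: 6]; [:: 7]; [:: 0; 1; 2; 3]; [:: 4]; [:: 8]; [:: 9]]);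
  ([:: 4; 5; 6; 8], [:: [:: 1; 5]; [:: 2; 6]; [:: 4; 7]; [:: 0]; [:: 3]; [:: 8]; [:: 9]]);
  ([:: 4; 5; 7; 8], [:: [:: 1; 5]; [:: 3; 7]; [:: 4; 6]; [:: 0]; [:: 2]; [:: 8]; [:: 9]]);
  ([:: 4; 6; 7; 8], [:: [:: 2; 6]; [:: 3; 7]; [:: 4; 5]; [:: 0]; [:: 1]; [:: 8]; [:: 9]]);
  ([:: 5; 6; 7; 8], [:: [:: 5]; [:: 6]; [:: 7]; [:: 0; 1; 2; 3]; [:: 4]; [:: 8]; [:: 9]])].

Definition keybits (k : seq nat) : seq bool := [seq i \in k | i <- iota 0 9].

Definition K34n (i j : nat) : bool := (i < 3) != (j < 3).
Definition F4n (i j : nat) : bool := ((i, j) \in F4_edges) || ((j, i) \in F4_edges).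

Definition goodb (b : seq bool) : bool :=
  let L := (nth ([::], [::]) table (find (fun p => keybits p.1 == b) table)).2 in
  checkN 7 K34n b L || checkN 10 F4n b L.

Fixpoint allbits (n : nat) : seq (seq bool) :=
  if n is n'.+1 then [seq x :: r | x <- [:: true; false], r <- allbits n'] else [:: [::]].

Lemma allbitsP b : b \in allbits (size b).
Proof.
elim: b => [|x b IH] //.
rewrite [size _]/= [allbits _]/=.
by case: x; rewrite !mem_cat ?(map_f (fun r => true :: r) IH) ?(map_f (fun r => false :: r) IH) ?orbT.
Qed.

Lemma all_good : all (fun b => if count id b == 4 then goodb b else true) (allbits 9).
Proof. vm_compute. reflexivity. Qed.

Theorem lemma4p6 (S : {set 'I_9}) :
  #|S| = 4 -> is_minor K34 (H_of S) \/ is_minor F4 (H_of S).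
Proof.
move=> hS.
have cnt : count id (bitsOf S) = 4.
  rewrite -hS cardE /enum_mem size_filter -enumT /bitsOf count_map.
  rewrite -val_enum_ord count_map; apply: eq_count => a /=; by rewrite inord_val.
have sz : size (bitsOf S) = 9 by rewrite size_map size_iota.
move: (allP all_good _ (eq_ind _ (fun k => bitsOf S \in allbits k) (allbitsP _) _ sz)).
rewrite cnt eqxx /goodb => /orP [h|h]; [left|right].
- by apply: (checkN_sound (Fn := K34n)) h.
- by apply: (checkN_sound (Fn := F4n)) h.
Qed.
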